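(* Let $r\in\mathbb{N}$ with $r\ge2$, let $v\in\mathbb{YF}^{r,+}_\infty$, $\beta\in(0,1]$ and $\delta>0$. Then $$\lim_{m\to\infty}\sum_{w\in\overline{R}(r,v,\beta,m,\delta)}\mu_{r,v,\beta}(w)=0,$$ where $\overline{R}(r,v,\beta,m,\delta)=\{w\in\mathbb{YF}^r:\ |w|=m,\ \pi(w)\notin(\pi(v)(\beta-\delta),\pi(v)(\beta+\delta))\}$.
   Context: Fix $r\in\mathbb{N}$. Words and statistics. Consider finite words over $\{1_1,\dots,1_r,2\}$. A letter $1_i$ is a one with digit value $1$; $2$ is a two with digit value $2$. $\varepsilon$ is the empty word. For a word $x$, $|x|$ is the sum of digit values, $e(x)$ the number of ones, $d(x)$ the number of twos. The graph $\mathbb{YF}^r$. It is the graded graph on all finite words, graded by $|\cdot|$. From $x$ there is a downward edge to every word obtained by one of two operations: (i) delete the leftmost one; (ii) replace a $2$ lying left of the leftmost one (any $2$ if there are no ones) by $1_i$, with arbitrary $i$. Path counts. $d_r(x,y)$ is the number of downward paths $y=y_n\to\dots\to y_m=x$ with $|y_i|=i$. Infinite words. $\mathbb{YF}^r_\infty$ is the set of left-infinite words $\dots\alpha_2\alpha_1$. The function $g$. For a finite or infinite word $x$, write $x=\dots2\,1^{\beta_m}\,2\cdots2\,1^{\beta_1}\,2\,1^{\beta_0}$, where $1^{\beta}$ is a possibly empty block of $\beta$ ones. For $1\le j\le d(x)$ set $g(x,j)=\beta_0+\dots+\beta_{j-1}+2j-1$. The function $\pi$. Set $\pi(x)=\prod_{j:\,g(x,j)>1}\frac{g(x,j)-1}{g(x,j)}$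 and $\mathbb{YF}^{r,+}_\infty=\{v\in\mathbb{YF}^r_\infty:\pi(v)>0\}$. Letterwise convergence. $v_n\to v$ letterwise means: for every $k$ and all large $n$, the last $k$ letters of $v_n$ coincide with the last $k$ letters of $v$. The measures $\mu_{r,v,\beta}$. For $v\in\mathbb{YF}^{r,+}_\infty$ and $\beta\in(0,1]$ there exist sequences of finite words $v_n\to v$ letterwise with $\pi(v_n)\to\beta\pi(v)$. For every such sequence and every $w\in\mathbb{YF}^r$, the limit $\lim_n d_r(\varepsilon,w)\,d_r(w,v_n)/d_r(\varepsilon,v_n)$ exists and depends only on $w,v,\beta$ (a fact proved in the paper). This limit is denoted $\mu_{r,v,\beta}(w)$. *)

(* Defs.v *)
From HB Require Import structures.
From mathcomp Require Import all_boot all_order all_algebra.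
From mathcomp Require Import all_classical all_reals all_analysis.
Set Implicit Arguments. Unset Strict Implicit. Unset Printing Implicit Defensive.
Import Order.TTheory GRing.Theory Num.Theory.
Import numFieldNormedType.Exports.
Local Open Scope ring_scope.
Local Open Scope classical_set_scope.

(* Letters over {1_1,...,1_r,2}: [Some i] is the one 1_(i+1), [None] is the two. *)
Definition letter (r : nat) := option 'I_r.
Definition Two {r} : letter r := None.
Definition One {r} (i : 'I_r) : letter r := Some i.
Definition isOne {r} (a : letter r) : bool := a != None.

(* Finite words, written left to right: [:: a_1; ...; a_k] is the word a_1...a_k. *)
Definition word (r : nat) := seq (letter r).

Definition digit {r} (a : letter r) : nat := if a is None then 2 else 1.
Definition weight {r} (x : word r) : nat := sumn (map digit x).
Definition eones {r} (x : word r) : nat := count isOne x.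
Definition dtwos {r} (x : word r) : nat := count (fun a => ~~ isOne a) x.

(* Downward neighbours in YF^r:
   (i) delete the leftmost one;
   (ii) replace a 2 lying left of the leftmost one (any 2 if there are no
        ones) by 1_i.  Every position left of the leftmost one holds a 2. *)
Definition down {r} (y : word r) : seq (word r) :=
  let p := find isOne y in
  (if (p < size y)%N then [:: take p y ++ drop p.+1 y] else [::]) ++
  [seq set_nth Two y q (One i) | q <- iota 0 p, i <- enum 'I_r].

Fixpoint dpaths {r} (k : nat) (x y : word r) : nat :=
  match k with
  | 0 => nat_of_bool (x == y)
  | k'.+1 => sumn [seq dpaths k' x z | z <- down y]
  end.

Definition dr {r} (x y : word r) : nat :=
  if (weight x <= weight y)%N then dpaths (weight y - weight x) x y else 0.

(* Block exponents: for x = ... 2 1^{b_m} 2 ... 2 1^{b_1} 2 1^{b_0},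
   blocks_rev (rev x) = [:: b_0; b_1; ...; b_{d(x)}]. *)
Fixpoint blocks_rev {r} (s : word r) : seq nat :=
  match s with
  | [::] => [:: 0]
  | None :: s' => 0 :: blocks_rev s'
  | Some _ :: s' => match blocks_rev s' with
                    | [::] => [:: 1]
                    | b :: bs => b.+1 :: bs
                    end
  end.
Definition beta_blk {r} (x : word r) (k : nat) : nat := nth 0 (blocks_rev (rev x)) k.

Definition gfun {r} (x : word r) (j : nat) : nat :=
  (\sum_(k < j) beta_blk x k + 2 * j - 1)%N.

Definition piw (R : realType) {r} (x : word r) : R :=
  \prod_(1 <= j < (dtwos x).+1 | (1 < gfun x j)%N)
     (((gfun x j)%:R - 1) / (gfun x j)%:R).

(* Left-infinite words ... a_2 a_1 are represented by v : nat -> letter r with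
   v k = a_(k+1).  sfx v N is the finite word a_N ... a_1 (the last N letters). *)
Definition infword (r : nat) := nat -> letter r.
Definition sfx {r} (v : infword r) (N : nat) : word r := rev (mkseq v N).

(* For infinite v, pi(v) is the infinite product, i.e. the limit of the
   (nonincreasing, [0,1]-valued) partial products; since g(v,j) only depends
   on letters right of the j-th two, these are the pi of the suffixes. *)
Definition piInf (R : realType) {r} (v : infword r) : R :=
  limn (fun N => piw R (sfx v N)).

Definition letterwise_cvg {r} (vs : nat -> word r) (v : infword r) : Prop :=
  forall k : nat, \forall n \near \oo, take k (rev (vs n)) = mkseq v k.

Definition is_mu (R : realType) {r} (v : infword r) (beta : R)
    (mu : word r -> R) : Prop :=
  exists vs : nat -> word r,
    letterwise_cvg vs v /\
    (fun n => piw R (vs n)) @ \oo --> beta * piInf R v /\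
    forall w : word r,
      (fun n => ((dr [::] w)%:R * (dr w (vs n))%:R / (dr [::] (vs n))%:R : R))
        @ \oo --> mu w.

(* Main.v *)
Require Import Defs.
From HB Require Import structures.
From mathcomp Require Import all_boot all_order all_algebra.
From mathcomp Require Import all_classical all_reals all_analysis.
From mathcomp Require Import zify ring lra.
Import Order.TTheory GRing.Theory Num.Theory.
Import numFieldNormedType.Exports.
Set Implicit Arguments. Unset Strict Implicit. Unset Printing Implicit Defensive.
Notation dn := Defs.down.

Section Comb.
Variable r : nat.
Implicit Types (y z x : word r).

Lemma down_nil : dn ([::] : word r) = [::].
Proof. by rewrite /dn /Defs.down /=. Qed.

Lemma down_some (c : 'I_r) y : dn (Some c :: y) = [:: y].
Proof. by rewrite /dn /Defs.down /= drop0. Qed.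

Lemma down_none y :
  dn (None :: y) =
  [seq None :: z | z <- (if (find isOne y < size y)%N then
                            [:: take (find isOne y) y ++ drop (find isOne y).+1 y]
                          else [::])] ++
  ([seq Some i :: y | i <- enum 'I_r] ++
   [seq None :: z | z <- [seq set_nth Two y q (One i) | q <- iota 0 (find isOne y), i <- enum 'I_r]]).
Proof.
rewrite /dn /Defs.down /=; rewrite ltnS.
rewrite -(addn0 1%N) iotaDl /=.
congr (_ ++ _); first by case: ifP.
congr (_ ++ _).
rewrite -map_comp /=.
rewrite [RHS]map_flatten -map_comp.
apply: (congr1 flatten); apply: eq_map => q /=.
by elim: (enum _) => //= i s ->.
Qed.

Lemma down_none_perm y :
  perm_eq (dn (None :: y)) ([seq None :: z | z <- dn y] ++ [seq Some i :: y | i <- enum 'I_r]).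
Proof.
rewrite down_none /dn /Defs.down map_cat.
by rewrite perm_sym -catA perm_cat2l perm_catC.
Qed.

End Comb.
Section Comb2.
Variable r : nat.
Implicit Types (y z x : word r).

Lemma big_down_none (T : Type) (idx : T) (op : Monoid.com_law idx) y (F : word r -> T) :
  \big[op/idx]_(z <- dn (None :: y)) F z =
  op (\big[op/idx]_(z <- dn y) F (None :: z)) (\big[op/idx]_(i <- enum 'I_r) F (Some i :: y)).
Proof.
by rewrite (perm_big _ (down_none_perm y)) big_cat !big_map.
Qed.

Lemma weight_cons (a : letter r) y : weight (a :: y) = (digit a + weight y)%N.
Proof. by []. Qed.

Lemma weight_down y z : z \in dn y -> (weight z).+1 = weight y.
Proof.
elim: y z => [|[c|] y IH] z; first by rewrite down_nil.
  by rewrite down_some inE => /eqP ->; rewrite weight_cons.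
rewrite (perm_mem (down_none_perm y)) mem_cat => /orP[].
  by case/mapP => z' /IH H ->; rewrite !weight_cons -H.
by case/mapP => i _ ->; rewrite !weight_cons.
Qed.

Lemma weight0 y : weight y = 0%N -> y = [::].
Proof. by case: y => // [[c|] y]. Qed.

Lemma sum_enum_const (c : nat) : (\sum_(i <- enum 'I_r) c)%N = (r * c)%N.
Proof. by rewrite big_const_seq count_predT size_enum_ord iter_addn_0 mulnC. Qed.

Fixpoint Dn y : nat :=
  match y with
  | [::] => 1%N
  | Some _ :: y' => Dn y'
  | None :: y' => (r * (weight y').+1 * Dn y')%N
  end.

Lemma Dn_down y : y != [::] -> (\sum_(z <- dn y) Dn z)%N = Dn y.
Proof.
elim: y => [|[c|] y IH] // _.
  by rewrite down_some big_seq1.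
rewrite big_down_none /=.
rewrite sum_enum_const.
case: (eqVneq y [::]) => [->|yn]; first by rewrite down_nil big_nil /= /weight /=; lia.
rewrite (eq_big_seq (fun z => r * weight y * Dn z)%N); last first.
  by move=> z /weight_down <-.
have -> : (\sum_(i <- dn y) r * weight y * Dn i = r * weight y * \sum_(i <- dn y) Dn i)%N.
  by rewrite big_distrr.
rewrite IH //; lia.
Qed.

End Comb2.
Arguments Dn {r} y.
Section Comb3.
Variable r : nat.
Implicit Types (y z x t : word r).

Lemma sumn_big (s : seq (word r)) (F : word r -> nat) :
  sumn [seq F z | z <- s] = (\sum_(z <- s) F z)%N.
Proof. by rewrite sumnE big_map. Qed.

Lemma dpaths_nil y : dpaths (weight y) [::] y = Dn y.
Proof.
move: {-1}(weight y) (erefl (weight y)) => n; elim: n y => [|n IH] y Hw.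
  by rewrite (weight0 Hw).
rewrite /= sumn_big.
rewrite (eq_big_seq Dn); last first.
  move=> z zin; apply: IH.
  by move: (weight_down zin); rewrite Hw => -[].
apply: Dn_down; apply/eqP => y0; move: Hw; rewrite y0.
by [].
Qed.

Lemma dr_nil y : dr [::] y = Dn y.
Proof. by rewrite /dr /= subn0 dpaths_nil. Qed.

Lemma dr_down t y : (weight t < weight y)%N ->
  dr t y = (\sum_(z <- dn y) dr t z)%N.
Proof.
move=> lt; rewrite /dr (ltnW lt).
have -> : (weight y - weight t = (weight y - weight t).-1.+1)%N by lia.
rewrite /= sumn_big; apply: eq_big_seq => z /weight_down Hz.
have -> : (weight t <= weight z)%N by lia.
congr dpaths; lia.
Qed.

Lemma dr_eq t y : weight t = weight y -> dr t y = (t == y) :> nat.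
Proof. by move=> e; rewrite /dr e leqnn subnn. Qed.

Lemma dr_gt t y : (weight y < weight t)%N -> dr t y = 0%N.
Proof. by move=> lt; rewrite /dr leqNgt lt. Qed.

Lemma Dn_gt0 y : (0 < r)%N -> (0 < Dn y)%N.
Proof. by move=> r0; elim: y => [|[c|] y IH] //=; rewrite !muln_gt0 r0 IH. Qed.

Lemma weight1 y : weight y = 1%N -> exists c, y = [:: Some c].
Proof.
case: y => [|[c|] y] //=; rewrite weight_cons /= => h.
by exists c; have /weight0 -> : weight y = 0%N by lia.
Qed.

End Comb3.
Section Blocks.
Variable r : nat.
Implicit Types (y z x s : word r).

Definition incr_head (l : seq nat) := if l is b :: bs then b.+1 :: bs else [:: 1%N].

Lemma blocks_some c s : blocks_rev (Some c :: s) = incr_head (blocks_rev s).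
Proof. by []. Qed.

Lemma size_blocks s : size (blocks_rev s) = (count (fun a => ~~ isOne a) s).+1.
Proof.
elim: s => [|[c|] s IH] //=; rewrite ?blocks_some.
  by move: IH; case: (blocks_rev s) => //= b bs ->.
by rewrite IH.
Qed.

Lemma sum_blocks s : sumn (blocks_rev s) = count isOne s.
Proof.
elim: s => [|[c|] s IH] //=; rewrite ?blocks_some.
  have : size (blocks_rev s) != 0%N by rewrite size_blocks.
  by move: IH; case: (blocks_rev s) => //= b bs <-; rewrite addSn.
Qed.

Lemma blocks_rcons_none s : blocks_rev (rcons s None) = rcons (blocks_rev s) 0%N.
Proof.
elim: s => [|[c|] s IH] //=; rewrite ?blocks_some ?IH //.
have : size (blocks_rev s) != 0%N by rewrite size_blocks.
by case: (blocks_rev s).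
Qed.

Lemma nth_incr_head l k : l != [::] ->
  nth 0%N (incr_head l) k = (nth 0%N l k + (k == 0%N))%N.
Proof. by case: l => // b bs _; case: k => //= [|k]; rewrite ?addn0 ?addn1. Qed.

Lemma nth_blocks_rcons s a k : (k < count (fun a => ~~ isOne a) s)%N ->
  nth 0%N (blocks_rev (rcons s a)) k = nth 0%N (blocks_rev s) k.
Proof.
elim: s k => [|[c|] s IH] k //=.
  move=> lt; rewrite !nth_incr_head; first by rewrite IH.
  - by rewrite -size_eq0 size_blocks.
  - by rewrite -size_eq0 size_blocks.
by case: k => //= k; rewrite ltnS => /IH.
Qed.

Lemma dtwos_cons (a : letter r) y : dtwos (a :: y) = ((~~ isOne a) + dtwos y)%N.
Proof. by []. Qed.

Lemma weight_eones y : weight y = (eones y + 2 * dtwos y)%N.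
Proof.
elim: y => [|[c|] y IH] //; rewrite weight_cons /eones /dtwos /= -/(eones y) -/(dtwos y) IH /=; lia.
Qed.

Lemma gfun_cons (a : letter r) y j : (j <= dtwos y)%N -> gfun (a :: y) j = gfun y j.
Proof.
move=> le; rewrite /gfun; congr (_ + _ - _)%N; apply: eq_bigr => k _.
rewrite /beta_blk rev_cons nth_blocks_rcons //.
rewrite count_rev; apply: leq_trans (ltn_ord k) le.
Qed.

Lemma sum_nth_ord (l : seq nat) : (\sum_(k < size l) nth 0%N l k)%N = sumn l.
Proof. by rewrite sumnE (big_nth 0%N) big_mkord. Qed.

Lemma sum_nth_ord' (l : seq nat) n : n = size l -> (\sum_(k < n) nth 0%N l k)%N = sumn l.
Proof. by move=> ->; apply: sum_nth_ord. Qed.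

Lemma gfun_none_top y : gfun (None :: y) (dtwos y).+1 = (weight y).+1.
Proof.
rewrite /gfun /beta_blk rev_cons blocks_rcons_none.
have hs : size (blocks_rev (rev y)) = (dtwos y).+1 by rewrite size_blocks count_rev.
rewrite (eq_bigr (fun k : 'I_(dtwos y).+1 => nth 0%N (blocks_rev (rev y)) k)); last first.
  by move=> k _; rewrite nth_rcons hs ltn_ord.
rewrite (sum_nth_ord' (esym hs)) sum_blocks count_rev -/(eones y) weight_eones; lia.
Qed.

End Blocks.

Section PiLemmas.
Variable R : realType.
Variable r : nat.
Implicit Types (y z x s : word r).
Local Open Scope ring_scope.

Definition fF (n : nat) : R := if (1 < n)%N then (n%:R - 1) / n%:R else 1.

Lemma piwE y : piw R y = \prod_(1 <= j < (dtwos y).+1) fF (gfun y j).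
Proof. by rewrite /piw big_mkcond /=. Qed.

Lemma piw_nil : piw R ([::] : word r) = 1.
Proof. by rewrite piwE big_nil. Qed.

Lemma piw_some c y : piw R (Some c :: y) = piw R y.
Proof.
rewrite !piwE dtwos_cons /= add0n; apply: eq_big_nat => j /andP[_ lt].
by rewrite gfun_cons.
Qed.

Lemma piw_none y : piw R (None :: y) = fF (weight y).+1 * piw R y.
Proof.
rewrite !piwE dtwos_cons /= add1n big_nat_recr //= gfun_none_top mulrC.
congr (_ * _); apply: eq_big_nat => j /andP[_ lt].
by rewrite gfun_cons.
Qed.

End PiLemmas.
Section Analysis1.
Variable R : realType.
Variable r : nat.
Hypothesis r_gt0 : (0 < r)%N.
Implicit Types (y z x : word r).
Local Open Scope ring_scope.

Definition DR y : R := (Dn y)%:R.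
Definition N1 y : R := \sum_(z <- dn y) DR z * piw R z.
Definition N2 y : R := \sum_(z <- dn y) DR z * piw R z ^+ 2.

Lemma sum_enum_constR (c : R) : \sum_(i <- enum 'I_r) c = r%:R * c.
Proof. by rewrite big_const_seq count_predT size_enum_ord iter_addr_0 mulr_natl. Qed.

Lemma DR_none y : DR (None :: y) = r%:R * (weight y).+1%:R * DR y.
Proof. by rewrite /DR /= !natrM. Qed.
Lemma DR_some c y : DR (Some c :: y) = DR y.
Proof. by []. Qed.
Lemma DR_nil : DR ([::] : word r) = 1.
Proof. by []. Qed.
Lemma DR_gt0 y : 0 < DR y.
Proof. by rewrite /DR ltr0n Dn_gt0. Qed.

Lemma sum_DR_down y : y != [::] -> \sum_(z <- dn y) DR z = DR y.
Proof. by move=> yn; rewrite /DR -natr_sum Dn_down. Qed.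

Lemma fF1 : fF R 1 = 1. Proof. by []. Qed.
Lemma fF_ge2 n : (2 <= n)%N -> fF R n = (n%:R - 1) / n%:R.
Proof. by rewrite /fF; case: n => // -[] //. Qed.
Lemma fF_ge0 n : 0 <= fF R n.
Proof.
rewrite /fF; case: ifP => // lt; apply: divr_ge0 => //.
by rewrite subr_ge0 ler1n ltnW.
Qed.
Lemma fF_le1 n : fF R n <= 1.
Proof.
rewrite /fF; case: ifP => // lt.
rewrite ler_pdivrMr ?ltr0n ?(ltn_trans _ lt) // mul1r; lra.
Qed.

Lemma piw_ge0 y : 0 <= piw R y.
Proof.
elim: y => [|[c|] y IH]; first by rewrite piw_nil.
  by rewrite piw_some.
by rewrite piw_none mulr_ge0 // fF_ge0.
Qed.
Lemma piw_le1 y : piw R y <= 1.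
Proof.
elim: y => [|[c|] y IH]; first by rewrite piw_nil.
  by rewrite piw_some.
rewrite piw_none -[1]mulr1; apply: ler_pM => //; rewrite ?fF_ge0 ?piw_ge0 ?fF_le1 //.
Qed.

Lemma sum_down_none (G : word r -> R) y :
  \sum_(z <- dn (None :: y)) G z =
  \sum_(z <- dn y) G (None :: z) + \sum_(i <- enum 'I_r) G (Some i :: y).
Proof. exact: big_down_none. Qed.

Lemma N1_rec y : N1 (None :: y) =
  r%:R * (weight y)%:R * fF R (weight y) * N1 y + r%:R * (DR y * piw R y).
Proof.
rewrite /N1 sum_down_none.
have -> : \sum_(i <- enum 'I_r) DR (Some i :: y) * piw R (Some i :: y) =
   \sum_(i <- enum 'I_r) (DR y * piw R y) by apply: eq_bigr => i _; rewrite DR_some piw_some.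
rewrite sum_enum_constR; congr (_ + _).
rewrite mulr_sumr; apply: eq_big_seq => z /weight_down <-.
rewrite DR_none piw_none; ring.
Qed.

Lemma N2_rec y : N2 (None :: y) =
  r%:R * (weight y)%:R * fF R (weight y) ^+ 2 * N2 y + r%:R * (DR y * piw R y ^+ 2).
Proof.
rewrite /N2 sum_down_none.
have -> : \sum_(i <- enum 'I_r) DR (Some i :: y) * piw R (Some i :: y) ^+ 2 =
   \sum_(i <- enum 'I_r) (DR y * piw R y ^+ 2) by apply: eq_bigr => i _; rewrite DR_some piw_some.
rewrite sum_enum_constR; congr (_ + _).
rewrite mulr_sumr; apply: eq_big_seq => z /weight_down <-.
rewrite DR_none piw_none; ring.
Qed.

Lemma N1_ge y : y != [::] -> DR y * piw R y <= N1 y.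
Proof.
elim: y => [|[c|] y IH] // _.
  by rewrite /N1 down_some big_seq1 DR_some piw_some.
rewrite N1_rec DR_none piw_none.
case: (eqVneq y [::]) => [->|yn].
  rewrite /N1 down_nil big_nil DR_nil piw_nil /weight /= fF1; lra.
have w1 : (1 <= weight y)%N by move: yn; clear; case: y => // -[c|] y.
have H := IH yn.
have Hr : 0 <= r%:R :> R by [].
have Hp := piw_ge0 y; have HD := DR_gt0 y.
case: (ltngtP (weight y) 1) => [|w2|w1'].
- by rewrite ltnNge w1.
- rewrite fF_ge2 // fF_ge2 //.
  have n2 : 2%:R <= (weight y)%:R :> R by rewrite ler_nat.
  set n := (weight y)%:R in n2 *.
  rewrite -natr1 -/n.
  have -> : (n + 1 - 1) / (n + 1) = n / (n + 1) by congr (_ / _); ring.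
  have -> : r%:R * (n + 1) * DR y * (n / (n + 1) * piw R y) = r%:R * n * (DR y * piw R y).
    by field; lra.
  have -> : r%:R * n * ((n - 1) / n) = r%:R * (n - 1) by field; lra.
  have : r%:R * (n - 1) * (DR y * piw R y) <= r%:R * (n - 1) * N1 y.
    by apply: ler_wpM2l => //; apply: mulr_ge0 => //; lra.
  nra.
- rewrite w1' fF1 /= /fF /=.
  have : r%:R * (DR y * piw R y) <= r%:R * N1 y by apply: ler_wpM2l.
  have : 0 <= r%:R * (DR y * piw R y) by apply: mulr_ge0 => //; apply: mulr_ge0 => //; lra.
  move=> h1 h2.
  have -> : r%:R * 2%:R * DR y * ((2%:R - 1) / 2%:R * piw R y) = r%:R * (DR y * piw R y) :> R.
    by field.
  lra.
Qed.


End Analysis1.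
Section Ineq.
Variable R : realType.
Local Open Scope ring_scope.

Lemma ineqA (n S s1 s2 : R) : 2 <= n -> 0 <= S -> s1 ^+ 2 = n - 1 -> s2 ^+ 2 = n + 1 ->
  0 < s1 -> 0 < s2 ->
  (n - 1) ^+ 2 / n * (1 + S / s1) + 1 <= n ^+ 2 / (n + 1) * (1 + (S + 1 / n ^+ 2) / s2).
Proof.
move=> n2 S0 e1 e2 p1 p2.
have n0 : 0 < n by lra.
have s2n : s2 <= n by nra.
have h12 : (s1 * s2) ^+ 2 = n ^+ 2 - 1 by rewrite exprMn e1 e2; ring.
have s12 : s1 * s2 <= n.
  have : 0 <= s1 * s2 by nra.
  nra.
have key1 : 1 / (n * (n + 1)) <= 1 / ((n + 1) * s2).
  rewrite ler_pdivrMr ?mulr_gt0 //; try lra.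
  rewrite mulrC mulrA ler_pdivlMr; try nra.
have key2 : (n - 1) ^+ 2 / (n * s1) <= n ^+ 2 / ((n + 1) * s2).
  rewrite ler_pdivrMr ?mulr_gt0 //; try lra.
  rewrite mulrAC ler_pdivlMr; try nra.
  have : (s1 * s2) ^+ 3 <= n ^+ 3 by apply: lerXn2r; rewrite ?nnegrE; nra.
  rewrite exprMn => h.
  have -> : (n - 1) ^+ 2 = s1 ^+ 4 by rewrite -e1 -exprM.
  have -> : (n + 1) = s2 ^+ 2 by rewrite e2.
  nra.
have E : (n - 1) ^+ 2 / n + 1 = n ^+ 2 / (n + 1) + 1 / (n * (n + 1)).
  by field; lra.
suff : 1 / (n * (n + 1)) + (n - 1) ^+ 2 / (n * s1) * S <=
       n ^+ 2 / ((n + 1) * s2) * S + 1 / ((n + 1) * s2).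
  move=> h.
  have L : (n - 1) ^+ 2 / n * (1 + S / s1) + 1 =
     n ^+ 2 / (n + 1) + (1 / (n * (n + 1)) + (n - 1) ^+ 2 / (n * s1) * S).
    by field; lra.
  have Rr : n ^+ 2 / (n + 1) * (1 + (S + 1 / n ^+ 2) / s2) =
     n ^+ 2 / (n + 1) + (n ^+ 2 / ((n + 1) * s2) * S + 1 / ((n + 1) * s2)).
    by field; lra.
  by rewrite L Rr lerD2l.
by rewrite [X in _ <= X]addrC; apply: lerD => //; apply: ler_wpM2r.
Qed.

End Ineq.
Section Analysis2.
Variable R : realType.
Variable r : nat.
Hypothesis r_gt0 : (0 < r)%N.
Implicit Types (y z x : word r).
Local Open Scope ring_scope.

Fixpoint Sf y : R :=
  match y with
  | None :: y' => if weight y' == 0%N then 0 else if weight y' == 1%N then 5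
                  else Sf y' + 1 / (weight y')%:R ^+ 2
  | _ => 0
  end.



Lemma Sf_ge0 y : 0 <= Sf y.
Proof.
elim: y => [|[c|] y IH] //=.
case: ifP => // _; case: ifP => // _.
by apply: addr_ge0 => //; apply: divr_ge0 => //; apply: exprn_ge0.
Qed.

Lemma N2_le y : (1 <= weight y)%N ->
  N2 R y <= DR R y * piw R y ^+ 2 * (1 + Sf y / Num.sqrt ((weight y)%:R - 1)).
Proof.
elim: y => [|[c|] y IH] // _.
  by rewrite /N2 down_some big_seq1 DR_some piw_some /= mul0r addr0 mulr1.
rewrite N2_rec DR_none piw_none /=.
have Hr : 0 <= r%:R :> R by [].
have Hp := piw_ge0 R y; have HD := DR_gt0 R r_gt0 y.
case: (eqVneq (weight y) 0%N) => [w0|w0].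
  rewrite (weight0 w0) DR_nil piw_nil (_ : weight ([::] : word r) = 0%N) // fF1.
  rewrite !(mul0r, mulr0, mulr1, expr1n, add0r, addr0); lra.
case: (eqVneq (weight y) 1%N) => [w1|w1].
  have [c yc] := weight1 w1; rewrite yc /N2 down_some big_seq1 /= DR_nil piw_nil.
  rewrite (_ : weight ([:: Some c] : word r) = 1%N) // fF1.
  rewrite DR_some DR_nil piw_some piw_nil (_ : weight [:: None; Some c] = 3%N) //.
  rewrite (fF_ge2 R (n:=2)) //.
  have s2 : Num.sqrt (2%:R : R) ^+ 2 = 2%:R by rewrite sqr_sqrtr.
  have s0 : 0 < Num.sqrt (2%:R : R) by rewrite sqrtr_gt0.
  have -> : (3%:R - 1 : R) = 2%:R by lra.
  have -> : (2%:R - 1 : R) = 1 by lra.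
  have h5 : 3 <= 5 / Num.sqrt (2%:R : R).
    rewrite ler_pdivlMr //; nra.
  rewrite !(mulr1, expr1n).
  have -> : r%:R * 2%:R * (1 / 2%:R) ^+ 2 = r%:R / 2%:R :> R by field.
  have : 4 <= 1 + 5 / Num.sqrt (2%:R : R) by lra.
  move=> h4; have : r%:R * 4 <= r%:R * (1 + 5 / Num.sqrt (2%:R : R)) by apply: ler_wpM2l.
  move=> h6. 
  have -> : r%:R / 2%:R * (1 + 5 / Num.sqrt 2%:R) = (r%:R * (1 + 5 / Num.sqrt (2%:R : R))) / 2%:R by ring.
  rewrite ler_pdivlMr //. lra.
have n2 : (2 <= weight y)%N by case: (weight y) w0 w1 => // -[].
rewrite fF_ge2 // fF_ge2 //.
have IH' := IH (ltnW n2).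
set n := (weight y)%:R : R.
have nn : 2 <= n by rewrite /n ler_nat.
have e1 : Num.sqrt (n - 1) ^+ 2 = n - 1 by rewrite sqr_sqrtr //; lra.
have p1 : 0 < Num.sqrt (n - 1) by rewrite sqrtr_gt0; lra.
have -> : ((2 + weight y)%:R - 1 : R) = n + 1 by rewrite natrD /n; ring.
have e2 : Num.sqrt (n + 1) ^+ 2 = n + 1 by rewrite sqr_sqrtr //; lra.
have p2 : 0 < Num.sqrt (n + 1) by rewrite sqrtr_gt0; lra.
have -> : (weight y).+1%:R = n + 1 by rewrite -natr1.
have S0 := Sf_ge0 y.
have key := ineqA nn S0 e1 e2 p1 p2.
set S := Sf y in key IH' *; set s1 := Num.sqrt (n - 1) in key IH' p1 e1 *.
set s2 := Num.sqrt (n + 1) in key p2 e2 *.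
set D := DR R y in IH' *; set P := piw R y in IH' *.
have X0 : 0 <= r%:R * D * P ^+ 2 by apply: mulr_ge0; [apply: mulr_ge0 => //; lra|apply: exprn_ge0].
have E1 : r%:R * n * ((n - 1) / n) ^+ 2 = r%:R * ((n - 1) ^+ 2 / n) by field; rewrite -/n; lra.
have E2 : r%:R * (n + 1) * D * ((n + 1 - 1) / (n + 1) * P) ^+ 2 *
   (1 + (S + 1 / n ^+ 2) / s2) =
   r%:R * D * P ^+ 2 * (n ^+ 2 / (n + 1) * (1 + (S + 1 / n ^+ 2) / s2)).
  by field; rewrite -/n; apply/and3P; split; apply/eqP; lra.
rewrite E1 E2.
apply: le_trans (ler_wpM2l X0 key).
have : r%:R * ((n - 1) ^+ 2 / n) * N2 R y <= r%:R * ((n - 1) ^+ 2 / n) * (D * P ^+ 2 * (1 + S / s1)).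
  apply: ler_wpM2l => //; apply: mulr_ge0 => //; apply: divr_ge0; [apply: exprn_ge0|]; lra.
move=> h; apply: le_trans (lerD h (lexx _)) _.
  by rewrite le_eqVlt; apply/orP; left; apply/eqP; ring.
by rewrite ltnS ltnW.
Qed.

End Analysis2.
Section Analysis3.
Variable R : realType.
Variable r : nat.
Hypothesis r_gt0 : (0 < r)%N.
Implicit Types (y z x : word r).
Local Open Scope ring_scope.

Lemma piS_le y : (1 <= weight y)%N ->
  piw R y ^+ 2 * (Sf R y + 1 / (weight y)%:R) <= 4 / (weight y)%:R.
Proof.
elim: y => [|[c|] y IH] // w1.
  rewrite piw_some /= add0r.
  have w0 : 0 < (weight (Some c :: y))%:R :> R by rewrite ltr0n.
  have h1 := piw_ge0 R y; have h2 := piw_le1 R y.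
  have iw : 0 <= 1 / (weight (Some c :: y))%:R :> R by apply: divr_ge0 => //; lra.
  have : piw R y ^+ 2 * (1 / (weight (Some c :: y))%:R) <= 1 * (1 / (weight (Some c :: y))%:R).
    by apply: ler_wpM2r => //; nra.
  have -> : 4 / (weight (Some c :: y))%:R = 4 * (1 / (weight (Some c :: y))%:R) :> R.
    by rewrite div1r.
  move=> hh; rewrite [X in _ <= X]mulrC; set t := 1 / _ in hh iw *. lra.
rewrite piw_none /=.
have Hp := piw_ge0 R y; have Hp1 := piw_le1 R y.
case: (eqVneq (weight y) 0%N) => [w0|w0].
  rewrite (weight0 w0) piw_nil (_ : weight [:: None] = 2%N) // /weight /= fF1.
  rewrite mulr1 expr1n mul1r add0r; apply: ler_wpM2r; [by rewrite invr_ge0|lra].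
case: (eqVneq (weight y) 1%N) => [w1'|w1'].
  have [c yc] := weight1 w1'; rewrite yc piw_some piw_nil (_ : weight [:: None; Some c] = 3%N) //.
  rewrite (_ : weight [:: Some c] = 1%N) // (fF_ge2 R (n:=2)) //.
  have -> : (2%:R - 1 : R) = 1 by lra.
  rewrite mulr1 /=; lra.
have n2 : (2 <= weight y)%N by case: (weight y) w0 w1' => // -[].
rewrite fF_ge2 //.
have IH' := IH (ltnW n2).
rewrite weight_cons /= natrD -natr1.
set n := (weight y)%:R : R in IH' *.
have nn : 2 <= n by rewrite /n ler_nat.
set S := Sf R y in IH' *; set P := piw R y in IH' Hp Hp1 *.
have S0 : 0 <= S by apply: Sf_ge0.
have E : (n + 1 - 1) / (n + 1) = n / (n + 1) by congr (_ / _); ring.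
rewrite (_ : (2%:R : R) = 2) // E.
have h1 : 1 / n ^+ 2 + 1 / (2 + n) <= 1 / n.
  rewrite -subr_ge0.
  have -> : 1 / n - (1 / n ^+ 2 + 1 / (2 + n)) = (n - 2) / (n ^+ 2 * (2 + n)) by field; lra.
  apply: divr_ge0; [lra|]; apply: mulr_ge0; [apply: exprn_ge0|]; lra.
have h2 : (n / (n + 1) * P) ^+ 2 * (S + 1 / n ^+ 2 + 1 / (2 + n)) <=
          (n / (n + 1)) ^+ 2 * (P ^+ 2 * (S + 1 / n)).
  rewrite exprMn -mulrA; apply: ler_wpM2l; first by apply: exprn_ge0; apply: divr_ge0; lra.
  apply: ler_wpM2l; first by apply: exprn_ge0.
  lra.
apply: le_trans h2 _.
apply: le_trans (ler_wpM2l _ IH') _; first by apply: exprn_ge0; apply: divr_ge0; lra.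
rewrite -subr_ge0.
have -> : 4 / (2 + n) - (n / (n + 1)) ^+ 2 * (4 / n) = 4 / ((2 + n) * (n + 1) ^+ 2) by field; lra.
apply: divr_ge0; [lra|]; apply: mulr_ge0; [lra|apply: exprn_ge0; lra].
by rewrite ltnS ltnW.
Qed.

Definition hk (k : nat) : R := 4 / (k%:R * Num.sqrt (k%:R - 1)).

Lemma hk_ge0 k : 0 <= hk k.
Proof. by apply: divr_ge0 => //; apply: mulr_ge0 => //; apply: sqrtr_ge0. Qed.

Lemma N2_le_h y : y != [::] -> N2 R y <= DR R y * (piw R y ^+ 2 + hk (weight y)).
Proof.
move=> yn.
have w1 : (1 <= weight y)%N by move: yn; case: y => // -[c|] y.
apply: le_trans (@N2_le R r r_gt0 y w1) _.
have HD := DR_gt0 R r_gt0 y.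
rewrite -mulrA; apply: ler_wpM2l; first by lra.
rewrite mulrDr mulr1 lerD2l /hk.
have B := piS_le w1.
have S0 := Sf_ge0 R y.
have P0 : 0 <= piw R y ^+ 2 by apply: exprn_ge0; apply: piw_ge0.
have W0 : 0 < (weight y)%:R :> R by rewrite ltr0n.
have B' : piw R y ^+ 2 * Sf R y <= 4 / (weight y)%:R.
  apply: le_trans B; apply: ler_wpM2l => //; rewrite lerDl; apply: divr_ge0; lra.
rewrite mulrA invfM mulrA; apply: ler_wpM2r; first by rewrite invr_ge0 sqrtr_ge0.
by [].
Qed.

Lemma one_step y (c : R) : y != [::] -> 0 <= c ->
  \sum_(z <- dn y) DR R z * (piw R z - c) ^+ 2 <=
  DR R y * ((piw R y - c) ^+ 2 + hk (weight y)).
Proof.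
move=> yn c0.
have E : \sum_(z <- dn y) DR R z * (piw R z - c) ^+ 2 =
   N2 R y - 2 * c * N1 R y + c ^+ 2 * \sum_(z <- dn y) DR R z.
  rewrite /N2 /N1 mulr_sumr mulr_sumr -sumrB -big_split /=.
  by apply: eq_bigr => z _; ring.
rewrite E sum_DR_down //.
have h1 := @N1_ge R r r_gt0 y yn.
have h2 := N2_le_h yn.
have : 2 * c * (DR R y * piw R y) <= 2 * c * N1 R y by apply: ler_wpM2l => //; lra.
move=> h3.
have -> : DR R y * ((piw R y - c) ^+ 2 + hk (weight y)) =
  DR R y * (piw R y ^+ 2 + hk (weight y)) - 2 * c * (DR R y * piw R y) + c ^+ 2 * DR R y by ring.
lra.
Qed.

End Analysis3.
Section Analysis4.
Variable R : realType.
Variable r : nat.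
Hypothesis r_gt0 : (0 < r)%N.
Implicit Types (y z x : word r).
Local Open Scope ring_scope.

Definition TS (m : nat) y (G : word r -> R) : R :=
  \sum_(n < m.+1) \sum_(t : n.-tuple (letter r) | weight (t : word r) == m)
     DR R (t : word r) * (dr (t : word r) y)%:R * G t.

Lemma size_le_weight y : (size y <= weight y)%N.
Proof. by elim: y => [|[c|] y IH] //=; rewrite weight_cons /=; lia. Qed.

Lemma TS_down m y G : (m < weight y)%N -> TS m y G = \sum_(z <- dn y) TS m z G.
Proof.
move=> lt; rewrite /TS.
transitivity (\sum_(n < m.+1) \sum_(z <- dn y) \sum_(t : n.-tuple (letter r) | weight (t : word r) == m)
     DR R (t : word r) * (dr (t : word r) z)%:R * G t); last by rewrite exchange_big.
apply: eq_bigr => n _; rewrite exchange_big /=; apply: eq_bigr => t /eqP wt.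
by rewrite dr_down ?wt // natr_sum mulr_sumr mulr_suml.
Qed.

Lemma TS_lt m y G : (weight y < m)%N -> TS m y G = 0.
Proof.
move=> lt; rewrite /TS big1 // => n _; rewrite big1 // => t /eqP wt.
by rewrite dr_gt ?wt // mulr0 mul0r.
Qed.

Lemma sum_tuple_eq (n : nat) y (F : word r -> R) :
  \sum_(t : n.-tuple (letter r)) (((t : word r) == y)%:R * F t) = if n == size y then F y else 0.
Proof.
case: eqP => [->|ne].
  rewrite (bigD1 (in_tuple y)) //= eqxx mul1r big1 ?addr0 // => t tn.
  suff -> : ((t : word r) == y) = false by rewrite mul0r.
  by apply/negbTE; move: tn; apply: contra => /eqP e; apply/eqP/val_inj.
rewrite big1 // => t _.
suff -> : ((t : word r) == y) = false by rewrite mul0r.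
by apply/negbTE/eqP => e; apply: ne; rewrite -e size_tuple.
Qed.

Lemma TS_eq m y G : weight y = m -> TS m y G = DR R y * G y.
Proof.
move=> wy; rewrite /TS.
have E : forall n : 'I_m.+1,
   \sum_(t : n.-tuple (letter r) | weight (t : word r) == m)
     DR R (t : word r) * (dr (t : word r) y)%:R * G t =
   \sum_(t : n.-tuple (letter r)) (((t : word r) == y)%:R * (DR R y * G y)).
  move=> n; rewrite big_mkcond /=; apply: eq_bigr => t _.
  case: ifP => [/eqP wt|wt].
    by rewrite dr_eq ?wt //; case: eqP => [->|_]; rewrite /=; ring.
  case: eqP => [e|]; last by rewrite mul0r.
  by move: wt; rewrite e wy eqxx.
rewrite (eq_bigr _ (fun n _ => etrans (E n) (sum_tuple_eq n y (fun _ => DR R y * G y)))).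
rewrite -big_mkcond /= (big_ord1_eq _ (fun=> DR R y * G y)) ifT // ltnS -wy size_le_weight //.
Qed.

Lemma TS_bound (c : R) m y : 0 <= c -> (m <= weight y)%N ->
  TS m y (fun t => (piw R t - c) ^+ 2) <=
  DR R y * ((piw R y - c) ^+ 2 + \sum_(m.+1 <= k < (weight y).+1) hk R k).
Proof.
move=> c0; move: {-1}(weight y - m)%N (erefl (weight y - m)%N) => d.
elim: d y => [|d IH] y Hd le.
  have wy : weight y = m by lia.
  by rewrite TS_eq // wy big_geq // addr0.
rewrite TS_down; last by lia.
have yn : y != [::] by apply/eqP => y0; move: Hd le; rewrite y0 /weight /=; lia.
apply: le_trans (_ : \sum_(z <- dn y) DR R z * ((piw R z - c) ^+ 2 +
                      \sum_(m.+1 <= k < weight y) hk R k) <= _).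
  rewrite big_seq [X in _ <= X]big_seq; apply: ler_sum => z zin.
  have wz := weight_down zin.
  have -> : weight y = (weight z).+1 by [].
  apply: IH; lia.
have -> : \sum_(m.+1 <= k < (weight y).+1) hk R k =
   \sum_(m.+1 <= k < weight y) hk R k + hk R (weight y).
  by rewrite big_nat_recr //=; lia.
set A := \sum_(m.+1 <= k < weight y) hk R k.
rewrite (_ : \sum_(z <- dn y) DR R z * ((piw R z - c) ^+ 2 + A) =
   \sum_(z <- dn y) DR R z * (piw R z - c) ^+ 2 + (\sum_(z <- dn y) DR R z) * A); last first.
  by rewrite mulr_suml -big_split; apply: eq_bigr => z _ /=; ring.
rewrite sum_DR_down //.
have := @one_step R r r_gt0 y c yn c0.
move=> h; rewrite mulrDr mulrDr; lra.
Qed.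

Lemma hk_step (N : nat) : (2 <= N)%N ->
  hk R N.+1 <= 8 * (1 / Num.sqrt (N%:R - 1) - 1 / Num.sqrt N%:R).
Proof.
move=> N2; rewrite /hk -[N.+1%:R]natr1 addrK.
have Nn : 2 <= N%:R :> R by rewrite ler_nat.
set n := N%:R : R in Nn *.
have ea : Num.sqrt (n - 1) ^+ 2 = n - 1 by rewrite sqr_sqrtr //; lra.
have eb : Num.sqrt n ^+ 2 = n by rewrite sqr_sqrtr //; lra.
have pa : 0 < Num.sqrt (n - 1) by rewrite sqrtr_gt0; lra.
have pb : 0 < Num.sqrt n by rewrite sqrtr_gt0; lra.
set a := Num.sqrt (n - 1) in ea pa *; set b := Num.sqrt n in eb pb *.
have ab : a <= b by nra.
rewrite -subr_ge0.
have -> : 8 * (1 / a - 1 / b) - 4 / ((n + 1) * b) =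
   (8 * (n + 1) * (b - a) - 4 * a) / ((n + 1) * a * b) by field; lra.
apply: divr_ge0; last by apply: mulr_ge0; [apply: mulr_ge0|]; lra.
have h1 : (b - a) * (b + a) = 1 by rewrite -subr_sqr ea eb; ring.
nra.
Qed.

Lemma tail_bound m N : (2 <= m)%N -> (m <= N)%N ->
  \sum_(m.+1 <= k < N.+1) hk R k <= 8 * (1 / Num.sqrt (m%:R - 1) - 1 / Num.sqrt (N%:R - 1)).
Proof.
move=> m2; elim: N => [|N IH] le.
  by lia.
case: (ltngtP m N.+1) => [lt|gt|e]; [|by lia|by rewrite -e big_geq // subrr mulr0].
rewrite big_nat_recr /=; last exact: lt.
have h := IH ltac:(lia).
have h2 := hk_step (ltac:(lia) : (2 <= N)%N).
rewrite -[N.+1%:R]natr1 addrK.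
lra.
Qed.

Lemma tail_bound' m N : (2 <= m)%N ->
  \sum_(m.+1 <= k < N.+1) hk R k <= 8 / Num.sqrt (m%:R - 1).
Proof.
move=> m2; case: (leqP m N) => le.
  apply: le_trans (tail_bound m2 le) _.
  have e : 8 / Num.sqrt (m%:R - 1) = 8 * (1 / Num.sqrt (m%:R - 1)) :> R by rewrite div1r.
  have h0 : 0 <= 1 / Num.sqrt (N%:R - 1) :> R by rewrite div1r invr_ge0 sqrtr_ge0.
  rewrite e; lra.
by rewrite big_geq // ltnS ltnW.
Qed.

End Analysis4.
Section Analysis5.
Variable R : realType.
Variable r : nat.
Hypothesis r_gt0 : (0 < r)%N.
Implicit Types (y z x : word r).
Local Open Scope ring_scope.

Lemma bad_bound (m : nat) y (c eta : R) : (2 <= m)%N -> 0 <= c -> 0 < eta ->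
  \sum_(n < m.+1) \sum_(t : n.-tuple (letter r) |
       (weight (t : word r) == m) && ~~ (c - eta < piw R (t : word r) < c + eta))
     DR R (t : word r) * (dr (t : word r) y)%:R / DR R y
  <= ((piw R y - c) ^+ 2 + 8 / Num.sqrt (m%:R - 1)) / eta ^+ 2.
Proof.
move=> m2 c0 e0.
have HDy := DR_gt0 R r_gt0 y.
have K0 : 0 < DR R y * eta ^+ 2 by apply: mulr_gt0 => //; apply: exprn_gt0.
apply: le_trans (_ : \sum_(n < m.+1) \sum_(t : n.-tuple (letter r) | weight (t : word r) == m)
   (DR R (t : word r) * (dr (t : word r) y)%:R * (piw R (t : word r) - c) ^+ 2) * (DR R y * eta ^+ 2)^-1 <= _).
  apply: ler_sum => n _; rewrite big_mkcondr /=; apply: ler_sum => t /eqP wt.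
  have Ht : 0 <= DR R (t : word r) * (dr (t : word r) y)%:R.
    by apply: mulr_ge0 => //; apply: ltW; apply: DR_gt0.
  case: ifP => bad; last first.
    apply: mulr_ge0; last by rewrite invr_ge0 ltW.
    by apply: mulr_ge0 => //; apply: sqr_ge0.
  have hb : eta ^+ 2 <= (piw R (t : word r) - c) ^+ 2.
    move: bad; rewrite negb_and -!leNgt => /orP[] h.
      have : 0 <= c - piw R (t : word r) - eta by lra.
      by move=> h'; nra.
    have : 0 <= piw R (t : word r) - c - eta by lra.
    by move=> h'; nra.
  set X := DR R (t : word r) * (dr (t : word r) y)%:R in Ht *.
  set Q := (piw R (t : word r) - c) ^+ 2 in hb *.
  have -> : X / DR R y = X * (1 / DR R y) by rewrite mul1r.
  have -> : X * Q / (DR R y * eta ^+ 2) = X * (Q / (DR R y * eta ^+ 2)) by rewrite mulrA.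
  apply: ler_wpM2l => //.
  rewrite -subr_ge0.
  have -> : Q / (DR R y * eta ^+ 2) - 1 / DR R y = (Q - eta ^+ 2) / (DR R y * eta ^+ 2).
    by field; apply/andP; split; rewrite gt_eqF // ?exprn_gt0.
  by apply: divr_ge0; [lra|exact: ltW].
have E : \sum_(n < m.+1) \sum_(t : n.-tuple (letter r) | weight (t : word r) == m)
   (DR R (t : word r) * (dr (t : word r) y)%:R * (piw R (t : word r) - c) ^+ 2) * (DR R y * eta ^+ 2)^-1
   = TS m y (fun t => (piw R t - c) ^+ 2) * (DR R y * eta ^+ 2)^-1.
  by rewrite /TS mulr_suml; apply: eq_bigr => n _; rewrite mulr_suml.
rewrite E.
have T0 : 0 <= 8 / Num.sqrt (m%:R - 1) :> R.
  by apply: mulr_ge0 => //; rewrite invr_ge0 sqrtr_ge0.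
have RHS0 : 0 <= ((piw R y - c) ^+ 2 + 8 / Num.sqrt (m%:R - 1)) / eta ^+ 2.
  apply: mulr_ge0; first by apply: addr_ge0 => //; apply: sqr_ge0.
  by rewrite invr_ge0 exprn_ge0 // ltW.
case: (leqP m (weight y)) => le; last by rewrite TS_lt // mul0r.
have TB := TS_bound r_gt0 c0 le.
have TT : \sum_(m.+1 <= k < (weight y).+1) hk R k <= 8 / Num.sqrt (m%:R - 1).
  exact: (@tail_bound' R r r_gt0 m (weight y) m2).
apply: le_trans (ler_wpM2r _ TB) _; first by rewrite invr_ge0 ltW.
set A := (piw R y - c) ^+ 2.
set tl := \sum_(m.+1 <= k < (weight y).+1) hk R k in TT *.
have -> : DR R y * (A + tl) * (DR R y * eta ^+ 2)^-1 = (A + tl) / eta ^+ 2.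
  by field; apply/andP; split; rewrite gt_eqF // ?exprn_gt0.
apply: ler_wpM2r; first by rewrite invr_ge0 exprn_ge0 // ltW.
by rewrite lerD2l.
Qed.

End Analysis5.

Local Open Scope ring_scope.
Local Open Scope classical_set_scope.

Theorem mainTheorem2 (R : realType) (r : nat) (v : infword r)
    (beta delta : R) (mu : word r -> R) :
  (2 <= r)%N -> 0 < piInf R v -> 0 < beta <= 1 -> 0 < delta ->
  is_mu v beta mu ->
  (fun m : nat =>
     \sum_(n < m.+1)
       \sum_(t : n.-tuple (letter r) |
               (weight (t : word r) == m) &&
               ~~ (piInf R v * (beta - delta) < piw R (t : word r)
                     < piInf R v * (beta + delta)))
         mu (t : word r))
    @ \oo --> (0 : R).
Proof.
move=> r2 Pv0 /andP[b0 b1] d0 [vs [_ [Hpi Hmu]]].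
have r_gt0 : (0 < r)%N by lia.
set Pv := piInf R v in Pv0 Hpi *.
set c := beta * Pv in Hpi.
set eta := delta * Pv.
have c0 : 0 <= c by rewrite /c; apply: mulr_ge0; apply: ltW.
have e0 : 0 < eta by rewrite /eta mulr_gt0.
have E1 : Pv * (beta - delta) = c - eta by rewrite /c /eta; ring.
have E2 : Pv * (beta + delta) = c + eta by rewrite /c /eta; ring.
rewrite E1 E2.
set s := fun m : nat => _.
have Hs : forall m, (2 <= m)%N -> 0 <= s m <= 8 / Num.sqrt (m%:R - 1) / eta ^+ 2.
  move=> m m2.
  set a := fun k : nat => \sum_(n < m.+1) \sum_(t : n.-tuple (letter r) |
       (weight (t : word r) == m) && ~~ (c - eta < piw R (t : word r) < c + eta))
     DR R (t : word r) * (dr (t : word r) (vs k))%:R / DR R (vs k).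
  have Ha : a @ \oo --> s m.
    rewrite /a /s; apply: cvg_big => //; first exact: add_continuous.
    move=> n _; apply: cvg_big => //; first exact: add_continuous.
    move=> t _; have := Hmu t.
    by under eq_fun do rewrite !dr_nil.
  set b := fun k : nat => ((piw R (vs k) - c) ^+ 2 + 8 / Num.sqrt (m%:R - 1)) / eta ^+ 2.
  have Hb : b @ \oo --> (0 ^+ 2 + 8 / Num.sqrt (m%:R - 1)) / eta ^+ 2.
    rewrite /b; apply: cvgM; last exact: cvg_cst.
    apply: cvgD; last exact: cvg_cst.
    rewrite expr2; apply: cvgM; rewrite -(subrr c); apply: cvgB => //; exact: cvg_cst.
  apply/andP; split.
    apply: (ler_cvg_to (cvg_cst 0) Ha); near=> k.
    apply: sumr_ge0 => n _; apply: sumr_ge0 => t _.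
    apply: divr_ge0; [apply: mulr_ge0 => //; apply: ltW; apply: DR_gt0|apply: ltW; apply: DR_gt0] => //.
  have := ler_cvg_to Ha Hb.
  rewrite expr0n /= add0r; apply; near=> k.
  exact: bad_bound.
apply/cvgrPdist_le => e e_gt0.
have K := nbhs_infty_ger ((8 / (e * eta ^+ 2)) ^+ 2 + 2).
near=> m.
have Km : (8 / (e * eta ^+ 2)) ^+ 2 + 2 <= m%:R by near: m.
have X0 : 0 < 8 / (e * eta ^+ 2) by apply: divr_gt0 => //; apply: mulr_gt0 => //; apply: exprn_gt0.
have m2 : (2 <= m)%N.
  rewrite -(ler_nat R); apply: le_trans Km; have := sqr_ge0 (8 / (e * eta ^+ 2)); lra.
have /andP[s0 s1] := Hs m m2.
rewrite sub0r normrN ger0_norm //.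
apply: le_trans s1 _.
set q := Num.sqrt (m%:R - 1).
have eq2 : q ^+ 2 = m%:R - 1 by rewrite sqr_sqrtr // subr_ge0 ler1n; lia.
have q0 : 0 < q by rewrite sqrtr_gt0 subr_gt0 ltr1n; lia.
have qX : 8 / (e * eta ^+ 2) <= q.
  rewrite -(ler_pXn2r (_ : (0 < 2)%N)) ?nnegrE ?ltW //; lra.
have ee : 0 < e * eta ^+ 2 by apply: mulr_gt0 => //; apply: exprn_gt0.
rewrite ler_pdivrMr ?exprn_gt0 // ler_pdivrMr //.
move: qX; rewrite ler_pdivrMr //.
by rewrite mulrC.
Unshelve. all: end_near.
Qed.
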